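(* Let $\Omega=\{z:\frac12<|z|<1\}$ and $\gamma_n=\frac{1-2^{-2(n+1)}}{2(n+1)}$ for $n\in\mathbb{Z}\setminus\{-1\}$, $\gamma_{-1}=\log2$. Let $\mathcal{H}$ be the Hilbert space of analytic functions on $\Omega$ of the form $f=\sum_{n\in\mathbb{Z}}\lambda_nf_n$ with $(\lambda_n)\in\ell^2(\mathbb{Z})$, normed by $\|f\|=(\sum_n|\lambda_n|^2)^{1/2}$, where $f_n(z)=(\gamma_n^{-1/2}+z)z^n$ for $n\ge0$ and $f_n(z)=\gamma_n^{-1/2}z^n$ for $n\le-1$ (i.e. $\mathcal{H}=\ell^2_{a,b}(\Omega)$ with $a_n=\gamma_n^{-1/2}$, $b_n=1$ for $n\ge0$, $b_n=0$ for $n\le-1$). Then the inclusion of $\mathcal{H}$ into the Bergman space $A^2(\Omega)$ is continuous and has dense range. Moreover, if $w_n=4$ for all $n\ge0$ and $w_n=\frac14$ for all $n\le-1$, then the weighted backward shift $B_w$ on $\mathcal{H}$ is topologically mixing and is similar to a compact perturbation of a bilateral weighted backward shift on $\ell^2(\mathbb{Z})$.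
   Context: The Bergman space $A^2(\Omega)$ consists of holomorphic $f$ on $\Omega$ with $\|f\|^2=\frac1{2\pi}\int_\Omega|f(z)|^2\,dA(z)<\infty$ ($dA$ area measure); equivalently $\|f\|^2=\sum_n|\widehat f(n)|^2\gamma_n$ for $f=\sum_n\widehat f(n)z^n$. $B_w$ acts by $B_w(\sum_n\widehat f(n)z^n)=\sum_nw_n\widehat f(n)z^{n-1}$. A bilateral weighted backward shift on $\ell^2(\mathbb{Z})$ is $e_n\mapsto\alpha_ne_{n-1}$ with bounded weights. $T$ is topologically mixing if for all nonempty open $U_1,U_2$, $\{k:T^k(U_1)\cap U_2\ne\varnothing\}$ is cofinite. *)

(* Defs.v *)
From HB Require Import structures.
From mathcomp Require Import all_boot all_order all_algebra.
From mathcomp Require Import all_classical all_reals all_analysis.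
From mathcomp Require Import complex.
Set Implicit Arguments. Unset Strict Implicit. Unset Printing Implicit Defensive.
Import Order.TTheory GRing.Theory Num.Theory.
Import numFieldNormedType.Exports.
Local Open Scope ring_scope.
Local Open Scope classical_set_scope.

(* An analytic function on the annulus Omega = {1/2 < |z| < 1} is identified *)
(* with its Laurent coefficient sequence (f z = sum_{n in Z} c n z^n); see   *)

Section Defs.
Variable R : realType.
Local Notation C := (R[i]).

Definition sqn (x : C) : R := (@complex.Re R x) ^+ 2 + (@complex.Im R x) ^+ 2.

Definition zpartial (v : int -> R) (N : nat) : R :=
  \sum_(k < N) (v (k%:Z) + v (- (k.+1)%:Z)).

(* for nonnegative v : the series sum_{n in Z} v n converges *)
Definition zsummable (v : int -> R) : Prop :=
  exists M : R, forall N : nat, zpartial v N <= M.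

Definition zsum (v : int -> R) : R :=
  limn (series (fun k : nat => v (k%:Z) + v (- (k.+1)%:Z))).

Definition subs (x y : int -> C) : int -> C := fun n => x n - y n.

Definition l2 (u : int -> C) : Prop := zsummable (fun n => sqn (u n)).
Definition l2sq (u : int -> C) : R := zsum (fun n => sqn (u n)).

Definition gamma (n : int) : R :=
  if n == -1 then ln (2 : R)
  else (1 - (2 : R) ^ (- (2 * (n + 1)))) / (2 * (n + 1)%:~R).

(* Bergman space A^2(Omega), via Laurent coefficients:
   ||f||^2 = sum_n |f^(n)|^2 gamma_n *)
Definition A2 (c : int -> C) : Prop := zsummable (fun n => gamma n * sqn (c n)).
Definition a2sq (c : int -> C) : R := zsum (fun n => gamma n * sqn (c n)).

Definition acoef (n : int) : R := (Num.sqrt (gamma n))^-1.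
Definition bcoef (n : int) : R := if 0 <= n then 1 else 0.

(* Laurent coefficients of f_n(z) = a_n z^n + b_n z^{n+1} *)
Definition fn (n : int) : int -> C :=
  fun m => if m == n then ((acoef n)%:C)%C else if m == n + 1 then ((bcoef n)%:C)%C else 0.

(* Laurent coefficients of sum_n lam_n f_n : coefficient m only receives
   contributions from n = m - 1 and n = m *)
Definition Phi (lam : int -> C) : int -> C :=
  fun m => lam (m - 1) * fn (m - 1) m + lam m * fn m m.

(* weighted backward shift on Laurent coefficients / on l^2(Z):
   (sum c_n z^n) |-> sum w_n c_n z^{n-1}, i.e. e_n |-> w_n e_{n-1} *)
Definition Bw (w : int -> C) (c : int -> C) : int -> C :=
  fun n => w (n + 1) * c (n + 1).

Definition w4 (n : int) : C := if 0 <= n then 4 else 4^-1.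

Definition l2_maps (F : (int -> C) -> (int -> C)) : Prop :=
  forall x, l2 x -> l2 (F x).

Definition l2_linear (F : (int -> C) -> (int -> C)) : Prop :=
  forall (a : C) x y, l2 x -> l2 y ->
    F (fun n => a * x n + y n) = (fun n => a * F x n + F y n).

Definition l2_continuous (F : (int -> C) -> (int -> C)) : Prop :=
  forall x, l2 x -> forall e : R, 0 < e -> exists d : R, 0 < d /\
    forall y, l2 y -> l2sq (subs y x) < d -> l2sq (subs (F y) (F x)) < e.

Definition l2_open (U : (int -> C) -> Prop) : Prop :=
  (forall x, U x -> l2 x) /\
  forall x, U x -> exists e : R, 0 < e /\
    forall y, l2 y -> l2sq (subs y x) < e -> U y.

Definition top_mixing (T : (int -> C) -> (int -> C)) : Prop :=
  forall U1 U2, l2_open U1 -> l2_open U2 -> (exists x, U1 x) -> (exists x, U2 x) ->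
    exists N : nat, forall k : nat, (N <= k)%N -> exists x, U1 x /\ U2 (iter k T x).

Definition l2_compact (K : (int -> C) -> (int -> C)) : Prop :=
  l2_maps K /\ l2_linear K /\
  forall xs : nat -> int -> C, (forall j, l2 (xs j) /\ l2sq (xs j) <= 1) ->
    exists (phi : nat -> nat) (y : int -> C),
      (forall j, (phi j < phi j.+1)%N) /\ l2 y /\
      (fun j => l2sq (subs (K (xs (phi j))) y)) @ \oo --> (0 : R).

Definition bounded_weights (alpha : int -> C) : Prop :=
  exists M : R, forall n, sqn (alpha n) <= M.

End Defs.

(* Main.v *)
Require Import Defs.
From HB Require Import structures.
From mathcomp Require Import all_boot all_order all_algebra.
From mathcomp Require Import all_classical all_reals all_analysis.
From mathcomp Require Import complex.
From mathcomp Require Import zify ring lra.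
Import Order.TTheory GRing.Theory Num.Theory.
Import numFieldNormedType.Exports.
Local Open Scope ring_scope.
Set Implicit Arguments. Unset Strict Implicit. Unset Printing Implicit Defensive.
Section ZS.
Variable R : realType.

Definition nonneg (v : int -> R) := forall n, 0 <= v n.

Lemma zpartialS (v : int -> R) N :
  zpartial v N.+1 = zpartial v N + (v N%:Z + v (- (N.+1)%:Z)).
Proof. by rewrite /zpartial big_ord_recr. Qed.

Lemma zpartial0 (v : int -> R) : zpartial v 0 = 0.
Proof. by rewrite /zpartial big_ord0. Qed.

Lemma zpartial_ge0 (v : int -> R) N : nonneg v -> 0 <= zpartial v N.
Proof. move=> hv; apply: sumr_ge0 => i _; exact: addr_ge0. Qed.

Lemma zpartial_nd (v : int -> R) : nonneg v ->
  {homo zpartial v : n m / (n <= m)%N >-> n <= m}.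
Proof.
move=> hv n m; elim: m => [|m IH]; first by rewrite leqn0 => /eqP ->.
rewrite leq_eqVlt => /orP [/eqP -> //| ]; rewrite ltnS => /IH h.
apply: (le_trans h); rewrite zpartialS lerDl; exact: addr_ge0.
Qed.

Lemma series_zpartial (v : int -> R) :
  series (fun k : nat => v (k%:Z) + v (- (k.+1)%:Z)) = zpartial v.
Proof.
apply: funext => N; by rewrite /series /= big_mkord.
Qed.

Lemma zsum_sup (v : int -> R) : nonneg v -> zsummable v ->
  zsum v = sup (range (zpartial v)).
Proof.
move=> hv [M hM]; rewrite /zsum series_zpartial.
apply: cvg_lim => //; apply: nondecreasing_cvgn; first exact: zpartial_nd.
by exists M => _ [N _ <-].
Qed.

Lemma zsum_ge (v : int -> R) N : nonneg v -> zsummable v -> zpartial v N <= zsum v.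
Proof.
move=> hv hs; rewrite zsum_sup //; case: hs => M hM.
apply: ub_le_sup; last by exists N.
by exists M => _ [k _ <-].
Qed.

Lemma zsum_le (v : int -> R) M : nonneg v -> (forall N, zpartial v N <= M) ->
  zsummable v /\ zsum v <= M.
Proof.
move=> hv hM; have hs : zsummable v by exists M.
split => //; rewrite zsum_sup //; apply: ge_sup; first by exists (zpartial v 0), 0%N.
by move=> _ [k _ <-].
Qed.

Lemma zsum_ge0 (v : int -> R) : nonneg v -> zsummable v -> 0 <= zsum v.
Proof. move=> hv hs; have := @zsum_ge v 0%N hv hs; by rewrite zpartial0. Qed.

Lemma zsum_adherent (v : int -> R) (e : R) : nonneg v -> zsummable v -> 0 < e ->
  exists N, zsum v - e < zpartial v N.
Proof.
move=> hv hs he; rewrite (zsum_sup hv hs).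
have [|x [N _ <-] h] := @sup_adherent R (range (zpartial v)) e he; last by exists N.
split; first by exists (zpartial v 0), 0%N.
by case: hs => M hM; exists M => _ [k _ <-].
Qed.

Lemma sqn_ge0 (x : R[i]) : 0 <= sqn x.
Proof. rewrite /sqn; apply: addr_ge0; exact: sqr_ge0. Qed.

Lemma sqnM (r : R) (x : R[i]) : sqn ((r%:C)%C * x) = r ^+ 2 * sqn x.
Proof. case: x => a b; rewrite /sqn /=. ring. Qed.

Lemma sqnD (x y : R[i]) : sqn (x + y) <= 2 * sqn x + 2 * sqn y.
Proof. case: x => a b; case: y => c d; rewrite /sqn /=. have h1 := sqr_ge0 (a - c). have h2 := sqr_ge0 (b - d). have h3 := sqr_ge0 (a + c). have h4 := sqr_ge0 (b + d). nra. Qed.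

Lemma sqnB (x y : R[i]) : sqn (x - y) <= 2 * sqn x + 2 * sqn y.
Proof. case: x => a b; case: y => c d; rewrite /sqn /=. have h1 := sqr_ge0 (a - c). have h2 := sqr_ge0 (b - d). have h3 := sqr_ge0 (a + c). have h4 := sqr_ge0 (b + d). nra. Qed.

Lemma sqn0 : sqn (0 : R[i]) = 0.
Proof. by rewrite /sqn /= expr0n /= addr0. Qed.

Lemma sqnN (x : R[i]) : sqn (- x) = sqn x.
Proof. case: x => a b; rewrite /sqn /=. ring. Qed.

Lemma sqnC (r : R) : sqn ((r%:C)%C) = r ^+ 2.
Proof. rewrite /sqn /=. ring. Qed.

Lemma zpartial_le (v w : int -> R) N : (forall n, v n <= w n) -> zpartial v N <= zpartial w N.
Proof. move=> h; apply: ler_sum => i _; exact: lerD. Qed.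

Lemma zpartial_lin (a b : R) (u w : int -> R) N :
  zpartial (fun n => a * u n + b * w n) N = a * zpartial u N + b * zpartial w N.
Proof.
rewrite /zpartial !mulr_sumr -big_split /=; apply: eq_bigr => i _; ring.
Qed.

Lemma zpartial_shiftP (u : int -> R) N :
  zpartial (fun n => u (n + 1)) N + u (- N%:Z) = zpartial u N + u N%:Z.
Proof.
elim: N => [|N IH]; first by rewrite !zpartial0 oppr0.
rewrite !zpartialS.
have -> : - (N.+1)%:Z + 1 = - N%:Z by lia.
have -> : N%:Z + 1 = N.+1%:Z by lia.
have : zpartial (fun n => u (n + 1)) N = zpartial u N + u N%:Z - u (- N%:Z) by rewrite -IH; ring.
move=> ->; ring.
Qed.

Lemma zpartial_shiftN (u : int -> R) N :
  zpartial (fun n => u (n - 1)) N + u (N%:Z - 1) = zpartial u N + u (- (N.+1)%:Z).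
Proof.
elim: N => [|N IH]; first by rewrite !zpartial0.
rewrite !zpartialS.
have -> : - (N.+1)%:Z - 1 = - (N.+2)%:Z by lia.
have -> : N.+1%:Z - 1 = N%:Z by lia.
have : zpartial (fun n => u (n - 1)) N = zpartial u N + u (- (N.+1)%:Z) - u (N%:Z - 1) by rewrite -IH; ring.
move=> ->; ring.
Qed.

Lemma zsum_shiftP (u : int -> R) : nonneg u -> zsummable u ->
  zsummable (fun n => u (n + 1)) /\ zsum (fun n => u (n + 1)) <= zsum u.
Proof.
move=> hu hs; apply: zsum_le => [n|N]; first exact: hu.
have := zpartial_shiftP u N; move/(congr1 (fun x => x - u (- N%:Z))).
rewrite addrK => ->.
apply: le_trans (zsum_ge N.+1 hu hs).
rewrite zpartialS; have := hu (- N%:Z); have := hu (- (N.+1)%:Z). lra.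
Qed.

Lemma zsum_shiftN (u : int -> R) : nonneg u -> zsummable u ->
  zsummable (fun n => u (n - 1)) /\ zsum (fun n => u (n - 1)) <= zsum u.
Proof.
move=> hu hs; apply: zsum_le => [n|N]; first exact: hu.
have := zpartial_shiftN u N; move/(congr1 (fun x => x - u (N%:Z - 1))).
rewrite addrK => ->.
apply: le_trans (zsum_ge N.+1 hu hs).
rewrite zpartialS; have := hu (N%:Z - 1); have := hu N%:Z. lra.
Qed.

Lemma zsum_shiftPk (u : int -> R) k : nonneg u -> zsummable u ->
  zsummable (fun n => u (n + k%:Z)) /\ zsum (fun n => u (n + k%:Z)) <= zsum u.
Proof.
move=> hu hs; elim: k => [|k [IH1 IH2]].
  have -> : (fun n => u (n + 0%:Z)) = u by apply: funext => n; rewrite addr0.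
  by split.
have -> : (fun n => u (n + k.+1%:Z)) = (fun n => (fun m => u (m + k%:Z)) (n + 1)).
  by apply: funext => n /=; congr u; lia.
have [] := zsum_shiftP (u := fun m => u (m + k%:Z)) (fun n => hu _) IH1.
move=> h1 h2; split => //; exact: le_trans IH2.
Qed.

Lemma zsum_shiftNk (u : int -> R) k : nonneg u -> zsummable u ->
  zsummable (fun n => u (n - k%:Z)) /\ zsum (fun n => u (n - k%:Z)) <= zsum u.
Proof.
move=> hu hs; elim: k => [|k [IH1 IH2]].
  have -> : (fun n => u (n - 0%:Z)) = u by apply: funext => n; rewrite subr0.
  by split.
have -> : (fun n => u (n - k.+1%:Z)) = (fun n => (fun m => u (m - k%:Z)) (n - 1)).
  by apply: funext => n /=; congr u; lia.
have [] := zsum_shiftN (u := fun m => u (m - k%:Z)) (fun n => hu _) IH1.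
move=> h1 h2; split => //; exact: le_trans IH2.
Qed.

End ZS.
Section G.
Variable R : realType.
Local Notation g := (gamma R).

Lemma gamma_nat (j : nat) : g j%:Z = (1 - ((4:R) ^+ j.+1)^-1) / (2 * j.+1%:R).
Proof.
rewrite /gamma /=.
have -> : - (2 * (j%:Z + 1)) = - ((2 * j.+1)%N%:Z) by lia.
rewrite -exprnN exprM (_ : (2:R) ^+ 2 = 4); last by rewrite expr2; lra.
have -> : j%:Z + 1 = (j.+1)%:Z by lia.
by [].
Qed.

Lemma gamma_neg (t : nat) : g (Negz t.+1) = ((4:R) ^+ t.+1 - 1) / (2 * t.+1%:R).
Proof.
rewrite /gamma /=.
have -> : - (2 * (Negz t.+1 + 1)) = ((2 * t.+1)%N%:Z) by lia.
have -> : (Negz t.+1 + 1) = - (t.+1%:Z) by lia.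
change ((2:R) ^ ((2 * t.+1)%N : int)) with ((2:R) ^+ (2 * t.+1)).
rewrite exprM (_ : (2:R) ^+ 2 = 4); last by rewrite expr2; lra.
rewrite mulrNz.
change ((t.+1%:Z)%:~R : R) with (t.+1%:R : R).
have h : (t.+1%:R : R) != 0 by rewrite pnatr_eq0.
field; by rewrite addrC natr1.
Qed.

Lemma gamma_m1 : g (Negz 0) = ln 2.
Proof. by rewrite /gamma /=. Qed.

Lemma ln2_gt0 : 0 < ln (2 : R).
Proof. apply: ln_gt0; lra. Qed.

Lemma four_pow j : 4 <= (4:R) ^+ j.+1.
Proof. rewrite exprS; have h : (1:R) <= 4 by lra. have := @exprn_ege1 R j 4 h; nra. Qed.

Lemma gamma_nat_bnd (j : nat) : exists y : R,
  3/4 * y <= g j%:Z /\ g j%:Z <= y /\ 0 < y /\ y * (2 * j.+1%:R) = 1.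
Proof.
exists (2 * j.+1%:R : R)^-1; set y := (2 * j.+1%:R : R)^-1; rewrite gamma_nat.
have hp := four_pow j.
have hx0 : 0 < ((4:R) ^+ j.+1)^-1 by rewrite invr_gt0; lra.
have hxp : ((4:R) ^+ j.+1)^-1 * (4:R) ^+ j.+1 = 1 by rewrite mulVf // gt_eqF //; lra.
have hx : ((4:R) ^+ j.+1)^-1 <= 1/4 by nra.
have hd : 0 < (2 * j.+1%:R : R) by rewrite mulr_gt0 // ltr0n.
have hy : 0 < y by rewrite invr_gt0.
have hyd : y * (2 * j.+1%:R) = 1 by rewrite mulVf // gt_eqF.
rewrite -/y; move: hx hx0 hy; set x := ((4:R) ^+ j.+1)^-1 => hx hx0 hy.
split; first nra.
by split; [nra|split].
Qed.

Lemma gamma_gt0 n : 0 < g n.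
Proof.
case: n => [j|[|t]].
- have [y [h1 [h2 [h3 h4]]]] := gamma_nat_bnd j; nra.
- rewrite gamma_m1; exact: ln2_gt0.
- rewrite gamma_neg; apply: divr_gt0; last by rewrite mulr_gt0 // ltr0n.
  have := four_pow t; lra.
Qed.

Lemma gamma_le4 (k : nat) : g (k.+1%:Z) <= 1/4.
Proof.
have [y [h1 [h2 [h3 h4]]]] := gamma_nat_bnd k.+1.
have : (1 : R) <= k.+1%:R by rewrite ler1n.
nra.
Qed.

Lemma gamma_neg_bnd (t : nat) : exists y : R,
  g (Negz t.+1) = ((4:R) ^+ t.+1 - 1) * y /\ 0 < y /\ y * (2 * t.+1%:R) = 1.
Proof.
exists (2 * t.+1%:R : R)^-1; rewrite gamma_neg; split => //.
have hd : 0 < (2 * t.+1%:R : R) by rewrite mulr_gt0 // ltr0n.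
by split; [rewrite invr_gt0|rewrite mulVf // gt_eqF].
Qed.

Definition wr (j : int) : R := if 0 <= j then 4 else 4^-1.
Definition ar (j : int) : R := wr j * Num.sqrt (g (j - 1)) / Num.sqrt (g j).

Lemma ar2 j : ar j ^+ 2 = wr j ^+ 2 * g (j - 1) / g j.
Proof.
rewrite /ar expr_div_n exprMn !sqr_sqrtr //; exact: ltW (gamma_gt0 _).
Qed.

Lemma wr_neq0 j : wr j != 0.
Proof. rewrite /wr; case: ifP => _; [|rewrite invr_eq0]; apply/eqP; lra. Qed.

Lemma ar_neq0 j : ar j != 0.
Proof.
rewrite /ar mulf_neq0 ?invr_eq0 ?mulf_neq0 ?wr_neq0 //; apply: lt0r_neq0;
  rewrite sqrtr_gt0; exact: gamma_gt0.
Qed.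

Lemma ar_big j : 1 <= j -> 2 <= ar j ^+ 2.
Proof.
case: j => [[|k]|t] h; [by []| |by []].
rewrite ar2 /wr /= (_ : k.+1%:Z - 1 = k%:Z); last by lia.
rewrite ler_pdivlMr ?gamma_gt0 //.
have [y1 [h1 [h2 [h3 h4]]]] := gamma_nat_bnd k.
have [y2 [h5 [h6 [h7 h8]]]] := gamma_nat_bnd k.+1.
move: h4 h8; rewrite -(natr1 k.+1); set d : R := k.+1%:R => h4 h8.
have hd : 1 <= d by rewrite ler1n.
have : y2 <= y1 by nra.
nra.
Qed.

Lemma ar_small j : j <= -2 -> ar j ^+ 2 <= 1/2.
Proof.
case: j => [k|[|t]] h; [by []|by []|].
rewrite ar2 /wr /= (_ : Negz t.+1 - 1 = Negz t.+2); last by lia.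
rewrite ler_pdivrMr ?gamma_gt0 //.
have [y1 [h1 [h2 h3]]] := gamma_neg_bnd t.
have [y2 [h4 [h5 h6]]] := gamma_neg_bnd t.+1.
rewrite h1 h4 (exprS _ t.+1); move: h3 h6; rewrite -(natr1 t.+1); set d : R := t.+1%:R => h3 h6.
have hd : 0 <= d by rewrite ler0n.
have hP := four_pow t; move: hP; set P := (4:R) ^+ t.+1 => hP.
have : y2 <= y1 by nra.
have -> : ((4:R)^-1) ^+ 2 = 1/16 by rewrite expr2; field.
nra.
Qed.

Lemma ar_bnd : exists M : R, forall j, ar j ^+ 2 <= M.
Proof.
have hL := ln2_gt0; have hLi : (ln (2:R))^-1 * ln 2 = 1 by rewrite mulVf // gt_eqF.
have hLi0 : 0 < (ln (2:R))^-1 by rewrite invr_gt0.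
have g0 : g 0 = 3/8 by rewrite (gamma_nat 0) expr1; field.
have gm2 : g (Negz 1) = 3/2 by rewrite (gamma_neg 0) expr1; field.
move: hL hLi hLi0; set L := ln (2:R); set Li := L^-1 => hL hLi hLi0.
exists (64 + 64 * L + Li) => j.
case: j => [[|k]|[|t]].
- rewrite ar2 /wr /= (_ : 0%:Z - 1 = Negz 0) // gamma_m1 g0 -/L.
  rewrite ler_pdivrMr; last lra. 
  have -> : (4:R) ^+ 2 = 16 by rewrite expr2; lra.
  nra.
- rewrite ar2 /wr /= (_ : k.+1%:Z - 1 = k%:Z); last by lia.
  rewrite ler_pdivrMr ?gamma_gt0 //.
  have [y1 [h1 [h2 [h3 h4]]]] := gamma_nat_bnd k.
  have [y2 [h5 [h6 [h7 h8]]]] := gamma_nat_bnd k.+1.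
  move: h4 h8; rewrite -(natr1 k.+1); set d : R := k.+1%:R => h4 h8.
  have hd : 1 <= d by rewrite ler1n.
  have : y1 <= 2 * y2 by nra.
  have -> : (4:R) ^+ 2 = 16 by rewrite expr2; lra.
  have := gamma_gt0 k.+1; nra.
- rewrite ar2 /wr /= (_ : Negz 0 - 1 = Negz 1) // gamma_m1 gm2 -/L.
  rewrite ler_pdivrMr //.
  have -> : ((4:R)^-1) ^+ 2 = 1/16 by rewrite expr2; field.
  nra.
- apply: le_trans (ar_small _) _; first by [].
  lra.
Qed.
End G.

Section Ops.
Variable R : realType.
Local Notation C := (R[i]).
Local Notation g := (gamma R).
Local Notation "x %:C" := (real_complex R x).

Lemma zsum_cmp2 (v u1 u2 : int -> R) (a b : R) : nonneg v -> nonneg u1 -> nonneg u2 ->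
  zsummable u1 -> zsummable u2 -> 0 <= a -> 0 <= b ->
  (forall n, v n <= a * u1 n + b * u2 n) ->
  zsummable v /\ zsum v <= a * zsum u1 + b * zsum u2.
Proof.
move=> hv h1 h2 s1 s2 ha hb h; apply: zsum_le => // N.
apply: le_trans (zpartial_le N h) _; rewrite zpartial_lin.
apply: lerD; apply: ler_wpM2l => //; exact: zsum_ge.
Qed.

Lemma sqn_nonneg (x : int -> C) : nonneg (fun n => sqn (x n)).
Proof. move=> n; exact: sqn_ge0. Qed.

Lemma l2_add (x y : int -> C) : l2 x -> l2 y ->
  l2 (fun n => x n + y n) /\ l2sq (fun n => x n + y n) <= 2 * l2sq x + 2 * l2sq y.
Proof.
move=> hx hy; apply: zsum_cmp2 => //; try exact: sqn_nonneg; try lra.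
move=> n; exact: sqnD.
Qed.

Lemma l2_subs (x y : int -> C) : l2 x -> l2 y ->
  l2 (subs x y) /\ l2sq (subs x y) <= 2 * l2sq x + 2 * l2sq y.
Proof.
move=> hx hy; apply: zsum_cmp2 => //; try exact: sqn_nonneg; try lra.
move=> n; exact: sqnB.
Qed.

Lemma l2sq_ge0 (x : int -> C) : l2 x -> 0 <= l2sq x.
Proof. move=> hx; apply: zsum_ge0 => //; exact: sqn_nonneg. Qed.

Lemma zpartial0f N : zpartial (fun _ : int => (0:R)) N = 0.
Proof. by rewrite /zpartial big1 // => i _; rewrite addr0. Qed.

Lemma zsum0 : zsum (fun _ : int => (0:R)) = 0.
Proof.
have [hs h] : zsummable (fun _ : int => (0:R)) /\ zsum (fun _ : int => (0:R)) <= 0.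
  by apply: zsum_le => [n|N]; rewrite ?zpartial0f.
apply/eqP; rewrite eq_le h /=; apply: zsum_ge0 => // n.
Qed.

Lemma l2_zero : l2 (fun _ : int => (0 : C)) /\ l2sq (fun _ : int => (0 : C)) = 0.
Proof.
rewrite /l2 /l2sq sqn0; split; last exact: zsum0.
by exists 0 => N; rewrite zpartial0f.
Qed.


Lemma Phi_E (lam : int -> C) m :
  Phi lam m = lam (m - 1) * (bcoef R (m - 1))%:C + lam m * (acoef R m)%:C.
Proof.
rewrite /Phi /fn eqxx.
have -> : (m == m - 1) = false by apply/eqP; lia.
by rewrite subrK eqxx.
Qed.

Definition sc (n : int) : R := Num.sqrt (g n) * bcoef R (n - 1).
Definition Dm (x : int -> C) : int -> C := fun n => (Num.sqrt (g n))%:C * x n.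
Definition Dinv (x : int -> C) : int -> C := fun n => ((Num.sqrt (g n))^-1)%:C * x n.
Definition Sm (x : int -> C) : int -> C := Dm (Phi x).

Lemma sqrtg_neq0 n : Num.sqrt (g n) != 0.
Proof. apply: lt0r_neq0; rewrite sqrtr_gt0; exact: gamma_gt0. Qed.

Lemma S_E x n : Sm x n = (sc n)%:C * x (n - 1) + x n.
Proof.
rewrite /Sm /Dm Phi_E /sc /acoef !rmorphM /=.
have h : (Num.sqrt (g n))%:C * ((Num.sqrt (g n))^-1)%:C = 1 :> C.
  by rewrite -rmorphM /= mulfV ?sqrtg_neq0 // rmorph1.
rewrite mulrDr [X in _ + X = _]mulrCA h mulr1; ring.
Qed.

Lemma DinvDm x : Dinv (Dm x) = x.
Proof.
apply: funext => n; rewrite /Dinv /Dm mulrA -rmorphM /= mulVf ?sqrtg_neq0 //.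
by rewrite rmorph1 mul1r.
Qed.

Lemma DmDinv x : Dm (Dinv x) = x.
Proof.
apply: funext => n; rewrite /Dinv /Dm mulrA -rmorphM /= mulfV ?sqrtg_neq0 //.
by rewrite rmorph1 mul1r.
Qed.

Lemma sc_le0 n : n <= 0 -> sc n = 0.
Proof. move=> h; rewrite /sc /bcoef ifF ?mulr0 //; apply/negbTE; rewrite -ltNge; lia. Qed.

Lemma sc_pos (k : nat) : sc (k.+1%:Z) = Num.sqrt (g k.+1%:Z).
Proof. rewrite /sc /bcoef (_ : (0 <= k.+1%:Z - 1) = true) ?mulr1 //; lia. Qed.

Lemma sc2 n : sc n ^+ 2 <= 1/4.
Proof.
have h0 : (0:R) ^+ 2 <= 1/4 by rewrite expr0n /=; lra.
case: n => [[|k]|t]; [by rewrite sc_le0| |rewrite sc_le0 //; lia].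
rewrite sc_pos sqr_sqrtr ?gamma_le4 //; apply: ltW; apply: gamma_gt0.
Qed.

Fixpoint sinvp (y : int -> C) (k : nat) : C :=
  match k with
  | 0 => y 0
  | k'.+1 => y (k'.+1%:Z) - (Num.sqrt (g k'.+1%:Z))%:C * sinvp y k'
  end.

Definition Sinv (y : int -> C) (n : int) : C :=
  match n with Posz k => sinvp y k | Negz _ => y n end.

Lemma S_Sinv y : Sm (Sinv y) = y.
Proof.
apply: funext => n; rewrite S_E; case: n => [[|k]|t].
- by rewrite sc_le0 // mul0r add0r.
- rewrite sc_pos (_ : k.+1%:Z - 1 = k%:Z); last by lia.
  rewrite /=; ring.
- by rewrite sc_le0 // mul0r add0r.
Qed.

Lemma Sinv_S x : Sinv (Sm x) = x.
Proof.
apply: funext => n; case: n => [k|t] /=; last by rewrite S_E sc_le0 // mul0r add0r.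
elim: k => [|k IH] /=; first by rewrite S_E sc_le0 // mul0r add0r.
rewrite IH S_E sc_pos (_ : k.+1%:Z - 1 = k%:Z); last by lia.
ring.
Qed.


Lemma zpartial_split (v : int -> R) N :
  zpartial v N = \sum_(i < N) v i%:Z + \sum_(i < N) v (- (i.+1)%:Z).
Proof. by rewrite /zpartial big_split. Qed.

Lemma S_bnd x : l2 x -> l2 (Sm x) /\ l2sq (Sm x) <= 4 * l2sq x.
Proof.
move=> hx.
have [h1 h2] := zsum_shiftN (sqn_nonneg x) hx.
have [h3 h4] : l2 (Sm x) /\ l2sq (Sm x) <=
    2 * zsum (fun n => sqn (x (n - 1))) + 2 * zsum (fun n => sqn (x n)).
  apply: zsum_cmp2 => //; try exact: sqn_nonneg; try lra.
  move=> n; rewrite S_E; apply: le_trans (sqnD _ _) _; rewrite sqnM.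
  have := sc2 n; have := sqn_ge0 (x (n - 1)); have := sqn_ge0 (x n); nra.
split => //; rewrite /l2sq in h4 *; lra.
Qed.

Lemma Sinv_neg y i : Sinv y (- (i.+1)%:Z) = y (- (i.+1)%:Z).
Proof. by rewrite -NegzE. Qed.

Lemma sinvp_rec y k : sqn (sinvp y k.+1) <= 2 * sqn (y k.+1%:Z) + 1/2 * sqn (sinvp y k).
Proof.
rewrite /=; apply: le_trans (sqnB _ _) _; rewrite sqnM sqr_sqrtr; last first.
  apply: ltW; apply: gamma_gt0.
have := gamma_le4 R k; have := sqn_ge0 (sinvp y k); nra.
Qed.

Lemma sinvp_sum y N : \sum_(i < N) sqn (sinvp y i) + 2 * sqn (sinvp y N)
   <= 4 * \sum_(i < N.+1) sqn (y i%:Z).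
Proof.
elim: N => [|N IH].
  rewrite big_ord0 big_ord1 /=; have := sqn_ge0 (y 0); lra.
rewrite big_ord_recr /= [X in _ <= 4 * X]big_ord_recr /=.
have := sinvp_rec y N; lra.
Qed.

Lemma Sinv_bnd y : l2 y -> l2 (Sinv y) /\ l2sq (Sinv y) <= 4 * l2sq y.
Proof.
move=> hy; apply: zsum_le; first exact: sqn_nonneg.
move=> N.
apply: (@le_trans _ _ (4 * zpartial (fun n => sqn (y n)) N.+1)); last first.
  apply: ler_wpM2l; [lra|exact: zsum_ge (sqn_nonneg y) hy].
rewrite zpartial_split zpartial_split.
under [X in _ + X <= _]eq_bigr do rewrite Sinv_neg.
have h := sinvp_sum y N.
have h2 : 0 <= sqn (sinvp y N) by exact: sqn_ge0.
have h3 : \sum_(i < N) sqn (y (- (i.+1)%:Z)) <= \sum_(i < N.+1) sqn (y (- (i.+1)%:Z)).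
  rewrite big_ord_recr /= lerDl; exact: sqn_ge0.
have h4 : 0 <= \sum_(i < N.+1) sqn (y (- (i.+1)%:Z)).
  apply: sumr_ge0 => i _; exact: sqn_ge0.
rewrite (_ : \sum_(i < N) sqn (Sinv y i%:Z) = \sum_(i < N) sqn (sinvp y i)) //.
lra.
Qed.


Definition alphaC (j : int) : C := (ar R j)%:C.
Definition Bm : (int -> C) -> (int -> C) := Bw alphaC.

Lemma B_bnd : exists M : R, 0 < M /\ forall y, l2 y -> l2 (Bm y) /\ l2sq (Bm y) <= M * l2sq y.
Proof.
have [M hM] := ar_bnd R.
have hM0 : 0 <= M by apply: le_trans (hM 0) ; exact: sqr_ge0.
exists (M + 1); split; first lra.
move=> y hy.
have [h1 h2] := zsum_shiftP (sqn_nonneg y) hy.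
have [h3 h4] : l2 (Bm y) /\ l2sq (Bm y) <=
    (M + 1) * zsum (fun n => sqn (y (n + 1))) + 0 * zsum (fun n => sqn (y n)).
  apply: zsum_cmp2 => //; try exact: sqn_nonneg; try lra.
  move=> n; rewrite /Bm /Bw /alphaC sqnM.
  have := hM (n + 1); have := sqn_ge0 (y (n + 1)); nra.
split => //; rewrite /l2sq in h4 *.
have := l2sq_ge0 hy; rewrite /l2sq; nra.
Qed.

Lemma S_subs x y : Sm (subs y x) = subs (Sm y) (Sm x).
Proof. apply: funext => n; rewrite /subs !S_E; ring. Qed.

Lemma Sinv_subs x y : Sinv (subs y x) = subs (Sinv y) (Sinv x).
Proof.
apply: funext => n; rewrite /subs; case: n => [k|t] //=.
elim: k => [|k IH] //=; rewrite IH /subs; ring.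
Qed.

Lemma B_subs x y : Bm (subs y x) = subs (Bm y) (Bm x).
Proof. apply: funext => n; rewrite /subs /Bm /Bw; ring. Qed.

Lemma S_lin : l2_linear Sm.
Proof. move=> a x y _ _; apply: funext => n; rewrite !S_E; ring. Qed.

Lemma cont_of_bound (F : (int -> C) -> (int -> C)) (K : R) : 0 < K ->
  (forall x y, F (subs y x) = subs (F y) (F x)) ->
  (forall x, l2 x -> l2 (F x) /\ l2sq (F x) <= K * l2sq x) -> l2_continuous F.
Proof.
move=> hK hsub hb x hx e he; exists (e / K); split; first exact: divr_gt0.
move=> y hy hd; rewrite -hsub.
have [hs _] := l2_subs hy hx.
have [_ h] := hb _ hs.
apply: le_lt_trans h _.
by rewrite -ltr_pdivlMl // mulrC.
Qed.

Lemma w4_E j : w4 R j = (wr R j)%:C.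
Proof.
rewrite /w4 /wr; case: ifP => _; first by rewrite rmorph_nat.
by rewrite fmorphV rmorph_nat.
Qed.

Lemma Phi_Dinv x : Phi x = Dinv (Sm x).
Proof. by rewrite /Sm DinvDm. Qed.

Lemma DBD c : Dinv (Bm (Dm c)) = Bw (w4 R) c.
Proof.
apply: funext => n; rewrite /Dinv /Bm /Bw /Dm /alphaC /ar w4_E.
rewrite (_ : n + 1 - 1 = n); last by lia.
rewrite !rmorphM /= fmorphV /=.
have h1 := sqrtg_neq0 n; have h2 := sqrtg_neq0 (n + 1).
have h1' : (Num.sqrt (g n))%:C != 0 :> C by rewrite fmorph_eq0.
have h2' : (Num.sqrt (g (n+1)))%:C != 0 :> C by rewrite fmorph_eq0.
rewrite fmorphV /=; field.
by rewrite h1' h2'.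
Qed.

End Ops.

Section Mix.
Variable R : realType.
Local Notation C := (R[i]).
Local Notation g := (gamma R).
Local Notation "x %:C" := (real_complex R x).

Fixpoint beta (n : int) (k : nat) : R :=
  match k with 0 => 1 | k'.+1 => ar R (n + 1) * beta (n + 1) k' end.

Lemma iterB k (u : int -> C) n : iter k (@Bm R) u n = (beta n k)%:C * u (n + k%:Z).
Proof.
elim: k n => [|k IH] n /=; first by rewrite rmorph1 mul1r addr0.
rewrite [in LHS]/Bm /Bw IH /alphaC mulrA -rmorphM.
by rewrite (_ : n + 1 + k%:Z = n + k.+1%:Z) //; lia.
Qed.

Lemma beta_neq0 n k : beta n k != 0.
Proof. elim: k n => [|k IH] n /=; first exact: oner_neq0. by rewrite mulf_neq0 ?ar_neq0. Qed.

Lemma betaS n k : beta n k.+1 = beta n k * ar R (n + k%:Z + 1).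
Proof.
elim: k n => [|k IH] n; first by rewrite /= mulr1 mul1r addr0.
transitivity (ar R (n+1) * beta (n+1) k.+1); first by []. rewrite IH mulrA. change (ar R (n + 1) * beta (n + 1) k * ar R (n + 1 + k%:Z + 1) = beta n k.+1 * ar R (n + k.+1%:Z + 1)). congr (_ * ar R _); lia.
Qed.

Lemma two_pow (J : nat) : (J%:R + 1 : R) <= 2 ^+ J.
Proof.
elim: J => [|J IH]; first by rewrite expr0 add0r.
rewrite exprS -natr1; have : (0:R) <= J%:R by rewrite ler0n. lra.
Qed.

Lemma geom (s : nat -> R) (K0 : nat) : (forall k, 0 <= s k) ->
  (forall k, (K0 <= k)%N -> s k.+1 <= s k / 2) ->
  forall e : R, 0 < e -> exists K, forall k, (K <= k)%N -> s k <= e.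
Proof.
move=> h0 hs e he.
have hj : forall j, s (K0 + j)%N * 2 ^+ j <= s K0.
  elim => [|j IH]; first by rewrite addn0 expr0 mulr1.
  have := hs (K0 + j)%N (leq_addr _ _); rewrite addnS exprS => h.
  have : 0 <= 2 ^+ j :> R by apply: exprn_ge0; lra.
  nra.
have hmono : forall k d, (K0 <= k)%N -> s (k + d)%N <= s k.
  move=> k d hk; elim: d => [|d IH]; first by rewrite addn0.
  rewrite addnS; apply: le_trans (hs _ _) _; first exact: leq_trans hk (leq_addr _ _).
  have := h0 (k + d)%N; lra.
set J := Num.Def.archi_bound (s K0 / e).
have hJ : s K0 / e < J%:R by apply: archi_boundP; apply: divr_ge0 => //; exact: ltW.
exists (K0 + J)%N => k hk.
have -> : k = ((K0 + J) + (k - (K0 + J)))%N by rewrite subnKC.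
apply: le_trans (hmono _ _ (leq_addr _ _)) _.
have h1 := hj J; have h2 := two_pow J.
have h3 : s K0 < J%:R * e by rewrite -ltr_pdivrMr.
have h4 := h0 (K0 + J)%N.
have hJ0 : (0:R) <= J%:R by rewrite ler0n.
have h5 : 0 <= s (K0 + J)%N * (2 ^+ J - J%:R - 1) by apply: mulr_ge0 => //; lra.
rewrite leNgt; apply/negP => hc.
have h6 : 0 <= (s (K0 + J)%N - e) * J%:R by apply: mulr_ge0 => //; lra.
nra.
Qed.


Lemma E1 (m : int) (e : R) : 0 < e -> exists K, forall k, (K <= k)%N -> beta (m - k%:Z) k ^+ 2 <= e.
Proof.
apply: (geom (s := fun k => beta (m - k%:Z) k ^+ 2) (K0 := (absz m).+2)).
  move=> k; exact: sqr_ge0.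
move=> k hk /=.
rewrite (_ : m - k.+1%:Z + 1 = m - k%:Z); last by lia.
rewrite exprMn.
have h : ar R (m - k%:Z) ^+ 2 <= 1/2 by apply: ar_small; have := lez_abs m; lia.
have := sqr_ge0 (beta (m - k%:Z) k); nra.
Qed.

Lemma E2 (m : int) (e : R) : 0 < e -> exists K, forall k, (K <= k)%N -> (beta m k ^+ 2)^-1 <= e.
Proof.
apply: (geom (s := fun k => (beta m k ^+ 2)^-1) (K0 := absz m)).
  move=> k; rewrite invr_ge0; exact: sqr_ge0.
move=> k hk; cbv beta.
rewrite betaS exprMn invfM.
have h : 2 <= ar R (m + k%:Z + 1) ^+ 2 by apply: ar_big; have := lez_abs (- m); rewrite abszN; lia.
have h0 : 0 < ar R (m + k%:Z + 1) ^+ 2 by lra.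
have h1 : (ar R (m + k%:Z + 1) ^+ 2)^-1 <= 1/2.
  rewrite -[1/2]invf_div lef_pV2 ?posrE //; lra.
have h2 : 0 <= (beta m k ^+ 2)^-1 by rewrite invr_ge0; exact: sqr_ge0.
have : 0 < (ar R (m + k%:Z + 1) ^+ 2)^-1 by rewrite invr_gt0.
nra.
Qed.

Lemma unif (P : int -> nat -> Prop) :
  (forall m, exists K, forall k, (K <= k)%N -> P m k) ->
  forall N : nat, exists K, forall k, (K <= k)%N ->
    forall m, - N%:Z <= m -> m < N%:Z -> P m k.
Proof.
move=> hP; elim => [|N [K1 IH]].
  by exists 0%N => k _ m h1 h2; exfalso; lia.
have [K2 h2] := hP N%:Z; have [K3 h3] := hP (- (N.+1)%:Z).
exists (maxn K1 (maxn K2 K3)) => k hk m hm1 hm2.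
have [hl|hl] := boolP (m == N%:Z); first by rewrite (eqP hl); apply: h2; lia.
have [hl'|hl'] := boolP (m == - (N.+1)%:Z); first by rewrite (eqP hl'); apply: h3; lia.
apply: IH; lia.
Qed.

End Mix.

Section Mix2.
Variable R : realType.
Local Notation C := (R[i]).
Local Notation "x %:C" := (real_complex R x).

Definition inr (N : nat) (n : int) : bool := (- N%:Z <= n) && (n < N%:Z).
Definition trunc (N : nat) (x : int -> C) : int -> C := fun n => if inr N n then x n else 0.

Lemma trunc_bnd N x : l2 x -> l2 (trunc N x) /\ l2sq (trunc N x) <= l2sq x.
Proof.
move=> hx.
have [h1 h2] : l2 (trunc N x) /\ l2sq (trunc N x) <= 1 * l2sq x + 0 * l2sq x.
  apply: zsum_cmp2 => //; try exact: sqn_nonneg; try lra.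
  move=> n; rewrite /trunc; case: ifP => _; rewrite ?sqn0; have := sqn_ge0 (x n); lra.
split => //; lra.
Qed.

Lemma tail_partial (u : int -> R) N M : nonneg u ->
  zpartial (fun n => if inr N n then 0 else u n) M + zpartial u N <= zpartial u (maxn M N).
Proof.
move=> hu; elim: M => [|M IH]; first by rewrite zpartial0 add0r max0n.
rewrite zpartialS.
have [hMN|hMN] := ltnP M N.
  have -> : inr N M%:Z by rewrite /inr; apply/andP; split; lia.
  have -> : inr N (- (M.+1)%:Z) by rewrite /inr; apply/andP; split; lia.
  rewrite addr0 addr0.
  apply: le_trans IH _; apply: zpartial_nd => //; lia.
have -> : inr N M%:Z = false by rewrite /inr; apply/negbTE/negP => /andP [? ?]; lia.
have -> : inr N (- (M.+1)%:Z) = false by rewrite /inr; apply/negbTE/negP => /andP [? ?]; lia.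
have -> : maxn M.+1 N = (maxn M N).+1 by lia.
have -> : maxn M N = M by lia.
rewrite zpartialS; move: IH; rewrite (_ : maxn M N = M); last by lia.
lra.
Qed.

Lemma trunc_err x (e : R) : l2 x -> 0 < e -> exists N, l2sq (subs (trunc N x) x) < e.
Proof.
move=> hx he.
have [N hN] := zsum_adherent (sqn_nonneg x) hx he.
exists N.
have [_ h] : zsummable (fun n => sqn (subs (trunc N x) x n)) /\
     zsum (fun n => sqn (subs (trunc N x) x n)) <= zsum (fun n => sqn (x n)) - zpartial (fun n => sqn (x n)) N.
  apply: zsum_le; first by move=> n; exact: sqn_ge0.
  move=> M.
  have -> : (fun n => sqn (subs (trunc N x) x n)) = (fun n => if inr N n then 0 else sqn (x n)).
    apply: funext => n; rewrite /subs /trunc; case: ifP => _; by rewrite ?subrr ?sqn0 ?add0r ?sqnN.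
  have := tail_partial N M (sqn_nonneg x).
  have := zsum_ge (maxn M N) (sqn_nonneg x) hx.
  lra.
rewrite /l2sq; lra.
Qed.


Lemma fwd_small (x : int -> C) N (e : R) : l2 x -> (forall n, ~~ inr N n -> x n = 0) -> 0 < e ->
  exists K, forall k, (K <= k)%N -> l2 (iter k (@Bm R) x) /\ l2sq (iter k (@Bm R) x) <= e.
Proof.
move=> hx hsupp he.
have hL := l2sq_ge0 hx; move: hL; set L := l2sq x => hL.
have hL1 : 0 < L + 1 by lra.
have [d [hd0 hd]] : exists d : R, 0 < d /\ d * (L + 1) = e.
  exists (e / (L + 1)); split; first exact: divr_gt0.
  by rewrite mulrAC -mulrA mulfV ?mulr1 // gt_eqF.
have [K hK] := unif (P := fun m k => beta R (m - k%:Z) k ^+ 2 <= d) (fun m => E1 m hd0) N.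
exists K => k hk.
have [h1 h2] := zsum_shiftPk k (sqn_nonneg x) hx.
have [h3 h4] : l2 (iter k (@Bm R) x) /\ l2sq (iter k (@Bm R) x) <=
    d * zsum (fun n => sqn (x (n + k%:Z))) + 0 * l2sq x.
  apply: zsum_cmp2 => //; try exact: sqn_nonneg; try lra.
  move=> n; rewrite iterB sqnM.
  have hs := sqn_ge0 (x (n + k%:Z)).
  have [hin|hout] := boolP (inr N (n + k%:Z)).
    move: hin; rewrite /inr => /andP [hi1 hi2].
    have := hK k hk (n + k%:Z) hi1 hi2; rewrite (_ : n + k%:Z - k%:Z = n); last by lia.
    nra.
  rewrite hsupp // sqn0 mulr0; lra.
split => //.
move: h2; rewrite -/L => h2.
have : d * zsum (fun n => sqn (x (n + k%:Z))) <= d * L by apply: ler_wpM2l => //; exact: ltW.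
nra.
Qed.

Definition Gm (k : nat) (y : int -> C) : int -> C :=
  fun n => ((beta R (n - k%:Z) k)^-1)%:C * y (n - k%:Z).

Lemma iterG k y : iter k (@Bm R) (Gm k y) = y.
Proof.
apply: funext => n; rewrite iterB /Gm (_ : n + k%:Z - k%:Z = n); last by lia.
by rewrite mulrA -rmorphM mulfV ?beta_neq0 // rmorph1 mul1r.
Qed.

Lemma iter_add k (u v : int -> C) :
  iter k (@Bm R) (fun n => u n + v n) = fun n => iter k (@Bm R) u n + iter k (@Bm R) v n.
Proof. apply: funext => n; rewrite !iterB; ring. Qed.

Lemma bwd_small (y : int -> C) N (e : R) : l2 y -> (forall n, ~~ inr N n -> y n = 0) -> 0 < e ->
  exists K, forall k, (K <= k)%N -> l2 (Gm k y) /\ l2sq (Gm k y) <= e.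
Proof.
move=> hy hsupp he.
have hL := l2sq_ge0 hy; move: hL; set L := l2sq y => hL.
have hL1 : 0 < L + 1 by lra.
have [d [hd0 hd]] : exists d : R, 0 < d /\ d * (L + 1) = e.
  exists (e / (L + 1)); split; first exact: divr_gt0.
  by rewrite mulrAC -mulrA mulfV ?mulr1 // gt_eqF.
have [K hK] := unif (P := fun m k => (beta R m k ^+ 2)^-1 <= d) (fun m => E2 m hd0) N.
exists K => k hk.
have [h1 h2] := zsum_shiftNk k (sqn_nonneg y) hy.
have [h3 h4] : l2 (Gm k y) /\ l2sq (Gm k y) <=
    d * zsum (fun n => sqn (y (n - k%:Z))) + 0 * l2sq y.
  apply: zsum_cmp2 => //; try exact: sqn_nonneg; try lra.
  move=> n; rewrite /Gm sqnM exprVn.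
  have hs := sqn_ge0 (y (n - k%:Z)).
  have [hin|hout] := boolP (inr N (n - k%:Z)).
    move: hin; rewrite /inr => /andP [hi1 hi2].
    have := hK k hk (n - k%:Z) hi1 hi2.
    nra.
  rewrite hsupp // sqn0 mulr0; lra.
split => //.
move: h2; rewrite -/L => h2.
have : d * zsum (fun n => sqn (y (n - k%:Z))) <= d * L by apply: ler_wpM2l => //; exact: ltW.
nra.
Qed.


Lemma trunc_supp N (x : int -> C) n : ~~ inr N n -> trunc N x n = 0.
Proof. by rewrite /trunc => /negbTE ->. Qed.

Lemma B_mixing : top_mixing (@Bm R).
Proof.
move=> U1 U2 [hU1l hU1o] [hU2l hU2o] [x hx] [y hy].
have lx := hU1l _ hx; have ly := hU2l _ hy.
have [e1 [he1 hU1]] := hU1o _ hx; have [e2 [he2 hU2]] := hU2o _ hy.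
have he1' : 0 < e1 / 4 by apply: divr_gt0 => //; lra.
have he2' : 0 < e2 / 4 by apply: divr_gt0 => //; lra.
have [N1 hN1] := trunc_err lx he1'.
have [N2 hN2] := trunc_err ly he2'.
set x' := trunc N1 x; set y' := trunc N2 y.
have [lx' _] := trunc_bnd N1 lx; have [ly' _] := trunc_bnd N2 ly.
have [K1 hK1] := fwd_small lx' (fun n hn => trunc_supp _ hn) he2'.
have [K2 hK2] := bwd_small ly' (fun n hn => trunc_supp _ hn) he1'.
exists (maxn K1 K2) => k hk.
have [lG hG] := hK2 k (leq_trans (leq_maxr _ _) hk).
have [lB hB] := hK1 k (leq_trans (leq_maxl _ _) hk).
exists (fun n => x' n + Gm k y' n); split.
  have [lz _] := l2_add lx' lG.
  apply: hU1 => //.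
  have -> : subs (fun n => x' n + Gm k y' n) x = (fun n => subs x' x n + Gm k y' n).
    by apply: funext => n; rewrite /subs; ring.
  have [ls _] := l2_subs lx' lx.
  have [_ h] := l2_add ls lG.
  apply: le_lt_trans h _; lra.
rewrite iter_add iterG.
have [lz _] := l2_add lB ly'.
apply: hU2 => //.
have -> : subs (fun n => iter k (@Bm R) x' n + y' n) y = (fun n => iter k (@Bm R) x' n + subs y' y n).
  by apply: funext => n; rewrite /subs; ring.
have [ls _] := l2_subs ly' ly.
have [_ h] := l2_add lB ls.
apply: le_lt_trans h _; lra.
Qed.

Lemma mixing_conj (T B S Si : (int -> C) -> (int -> C)) :
  (forall x, l2 x -> l2 (S x)) -> (forall x, l2 x -> l2 (Si x)) ->
  (forall x, Si (S x) = x) -> (forall y, S (Si y) = y) ->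
  l2_continuous Si -> top_mixing B -> (forall x, T x = Si (B (S x))) -> top_mixing T.
Proof.
move=> hS hSi hSiS hSSi hcont hB hT.
have hiter : forall k x, iter k T x = Si (iter k B (S x)).
  elim => [|k IH] x /=; first by rewrite hSiS.
  by rewrite IH hT hSSi.
have openV : forall U : (int -> C) -> Prop, l2_open U -> l2_open (fun z => l2 z /\ U (Si z)).
  move=> U [_ hUo]; split; first by move=> z [].
  move=> z [lz hz]; have [e [he hU]] := hUo _ hz.
  have [d [hd hc]] := hcont z lz e he.
  exists d; split => // w lw hw; split => //; apply: hU; last exact: hc.
  exact: hSi.
move=> U1 U2 hU1 hU2 [x hx] [y hy].
have lx := hU1.1 _ hx; have ly := hU2.1 _ hy.
have [N hN] := hB _ _ (openV _ hU1) (openV _ hU2)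
   (ex_intro _ (S x) (conj (hS _ lx) (eq_ind_r U1 hx (hSiS x))))
   (ex_intro _ (S y) (conj (hS _ ly) (eq_ind_r U2 hy (hSiS y)))).
exists N => k hk; have [z [[lz hz1] [_ hz2]]] := hN k hk.
exists (Si z); split => //; by rewrite hiter hSSi.
Qed.

End Mix2.
Section Fin.
Variable R : realType.
Local Notation C := (R[i]).

Lemma A2_E (c : int -> C) : (fun n => gamma R n * sqn (c n)) = (fun n => sqn (Dm c n)).
Proof.
apply: funext => n; rewrite /Dm sqnM sqr_sqrtr //; apply: ltW; exact: gamma_gt0.
Qed.

Lemma Dm_subs (a b : int -> C) : Dm (subs a b) = subs (Dm a) (Dm b).
Proof. apply: funext => n; rewrite /Dm /subs; ring. Qed.

Lemma subs_self (c : int -> C) : subs c c = (fun _ => 0).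
Proof. apply: funext => n; by rewrite /subs subrr. Qed.

End Fin.
Unset Implicit Arguments.
Theorem proposition4p4 (R : realType) :
  (* the inclusion H -> A^2(Omega), lam |-> sum_n lam_n f_n, is well defined
     and continuous *)
  ((forall lam : int -> R[i], l2 lam -> A2 (Phi lam)) /\
   (forall lam : int -> R[i], l2 lam -> forall e : R, 0 < e ->
      exists d : R, 0 < d /\
        forall mu, l2 mu -> l2sq (subs mu lam) < d ->
          a2sq (subs (Phi mu) (Phi lam)) < e)) /\
  (* it has dense range *)
  (forall c : int -> R[i], A2 c -> forall e : R, 0 < e ->
     exists lam, l2 lam /\ A2 (subs c (Phi lam)) /\ a2sq (subs c (Phi lam)) < e) /\
  (* B_w is an operator on H (read in the coordinates lam), topologically
     mixing, and similar to a compact perturbation of a bilateral weighted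
     backward shift on l^2(Z) *)
  (exists T : (int -> R[i]) -> (int -> R[i]),
     (forall lam, l2 lam -> l2 (T lam) /\ Phi (T lam) = Bw (w4 R) (Phi lam)) /\
     l2_continuous T /\
     top_mixing T /\
     exists (S Sinv : (int -> R[i]) -> (int -> R[i])) (alpha : int -> R[i])
            (K : (int -> R[i]) -> (int -> R[i])),
       l2_maps S /\ l2_maps Sinv /\ l2_linear S /\
       l2_continuous S /\ l2_continuous Sinv /\
       (forall x, l2 x -> Sinv (S x) = x /\ S (Sinv x) = x) /\
       bounded_weights alpha /\ l2_compact K /\
       forall x, l2 x ->
         S (T x) = (fun n => Bw alpha (S x) n + K (S x) n)).

Proof.
have hSc : l2_continuous (@Sm R) by apply: (cont_of_bound (K := 4)) => //; [exact: S_subs|exact: S_bnd].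
have hSic : l2_continuous (@Sinv R) by apply: (cont_of_bound (K := 4)) => //; [exact: Sinv_subs|exact: Sinv_bnd].
have [M [hM hBb]] := B_bnd R.
split; [split|split].
- move=> lam hl; rewrite /A2 A2_E; exact: (S_bnd hl).1.
- move=> lam hl e he; have [d [hd h]] := hSc lam hl e he.
  exists d; split => // mu hmu hmd.
  rewrite /a2sq A2_E Dm_subs; exact: h.
- move=> c hc e he.
  have lD : l2 (Dm c) by rewrite /l2 -A2_E.
  exists (Sinv (Dm c)); split; first exact: (Sinv_bnd lD).1.
  rewrite Phi_Dinv S_Sinv DinvDm subs_self /A2 /a2sq.
  have -> : (fun n : int => gamma R n * sqn (0 : R[i])) = (fun _ => 0) by apply: funext => n; rewrite sqn0 mulr0.
  split; last by rewrite zsum0.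
  by exists 0 => N; rewrite zpartial0f.
have hT : forall x, l2 x -> l2 (Sinv (Bm (Sm x))) /\ l2sq (Sinv (Bm (Sm x))) <= 16 * M * l2sq x.
  move=> x hx; have [l1 b1] := S_bnd hx; have [l2' b2] := hBb _ l1.
  have [l3 b3] := Sinv_bnd l2'; split => //.
  have := l2sq_ge0 hx; have := l2sq_ge0 l1; have := l2sq_ge0 l2'; nra.
exists (fun x => Sinv (Bm (Sm x))); split; [|split; [|split]].
- move=> lam hl; split; first exact: (hT _ hl).1.
  by rewrite Phi_Dinv S_Sinv /Sm DBD.
- apply: (cont_of_bound (K := 16 * M)); [nra| |exact: hT].
  by move=> x y; rewrite S_subs B_subs Sinv_subs.
- apply: (mixing_conj (B := @Bm R) (S := @Sm R) (Si := @Sinv R)) => //.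
  + by move=> x hx; exact: (S_bnd hx).1.
  + by move=> x hx; exact: (Sinv_bnd hx).1.
  + exact: Sinv_S.
  + exact: S_Sinv.
  + exact: B_mixing.
exists (@Sm R), (@Sinv R), (@alphaC R), (fun _ _ => 0).
split; first by move=> x hx; exact: (S_bnd hx).1.
split; first by move=> x hx; exact: (Sinv_bnd hx).1.
split; first exact: S_lin.
split; first exact: hSc.
split; first exact: hSic.
split; first by move=> x _; rewrite Sinv_S S_Sinv.
split.
  have [Ma hMa] := ar_bnd R; exists Ma => n; rewrite /alphaC sqnC; exact: hMa.
split.
  split; first by move=> x _; exact: (l2_zero R).1.
  split; first by move=> a x y _ _; apply: funext => n; rewrite mulr0 addr0.
  move=> xs _; exists (fun j => j), (fun _ => 0); split; first by move=> j.
  split; first exact: (l2_zero R).1.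
  rewrite subs_self (l2_zero R).2; exact: cvg_cst.
move=> x hx; rewrite S_Sinv; apply: funext => n; by rewrite addr0.
Qed.
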